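(* Let $X$ be a finite $T_0$ topological space, $\mathcal V$ a multivector field on $X$ with $X$ invariant, and $\mathcal M=\{M_p\mid p\in\mathbb P\}$ a Morse predecomposition of $X$. Then for every nonempty isolated invariant set $S\subset X$ we have $S\cap\bigcup_{p\in\mathbb P}M_p\ne\emptyset$. In particular, every critical multivector $V\in\mathcal V$ satisfies $V\subset\bigcup_{p\in\mathbb P}M_p$.
   Context: Notation: $\operatorname{cl}$ is closure; $A\subset X$ is locally closed if $\operatorname{cl}A\setminus A$ is closed. A multivector field $\mathcal V$ on $X$ is a partition of $X$ into locally closed sets (multivectors); $[x]_{\mathcal V}$ is the multivector containing $x$. A multivector $V$ is critical if the relative singular homology $H(\operatorname{cl}V,\operatorname{cl}V\setminus V)$ is nontrivial, regular otherwise. $A$ is $\mathcal V$-compatible if it is a union of multivectors; $\langle A\rangle_{\mathcal V}$ is the smallest locally closed $\mathcal V$-compatible set containing $A$. $\Pi_{\mathcal V}(x)=\operatorname{cl}\{x\}\cup[x]_{\mathcal V}$. A solution is a partial map $\gamma:\mathbb Z\nrightarrow X$ with domain an integer interval and $\gamma(t+1)\in\Pi_{\mathcal V}(\gamma(t))$; a path has finite domain; a full solution has domain $\mathbb Z$. $\alpha(\gamma)=\langle\bigcap_{t\le0}\gamma((-\infty,t])\rangle_{\mathcal V}$, $\omega(\gamma)=\langle\bigcap_{t\ge0}\gamma([t,\infty))\rangle_{\mathcal V}$. A full solution is essential unless $\alpha(\gamma)$ or $\omega(\gamma)$ lies in a single regular multivector; an essential solution in $A$ is one with image in $A$. $\operatorname{Inv}S$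 is the set of $x\in S$ with an essential solution $\gamma$ in $S$, $\gamma(0)=x$; $S$ is invariant if $\operatorname{Inv}S=S$. An invariant $S$ is isolated invariant if there is a closed $N\supset\Pi_{\mathcal V}(S)$ such that every path in $N$ with endpoints in $S$ has image in $S$. A link from $S_1$ to $S_2$ is a full solution with $\alpha(\gamma)\cap S_1\ne\emptyset\ne\omega(\gamma)\cap S_2$. A Morse predecomposition of $X$ is an indexed family $\{M_p\mid p\in\mathbb P\}$ of mutually disjoint isolated invariant subsets of $X$ such that every essential solution in $X$ is a link from some $M_p$ to some $M_q$. *)

(* Defs.v *)
From Stdlib Require Import Reals ZArith ClassicalEpsilon.
From mathcomp Require Import all_boot.

Set Implicit Arguments.
Unset Strict Implicit.
Unset Printing Implicit Defensive.

Definition pb (P : Prop) : bool :=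
  if excluded_middle_informative P then true else false.

Section FiniteSpace.
Variable X : finType.
Variable op : {set {set X}}.

Definition is_topology : Prop :=
  [/\ set0 \in op, [set: X] \in op,
      (forall U V, U \in op -> V \in op -> U :|: V \in op) &
      (forall U V, U \in op -> V \in op -> U :&: V \in op)].

Definition T0 : Prop :=
  forall x y : X, x <> y ->
    exists2 U, U \in op & (x \in U) != (y \in U).

Definition closedb (C : {set X}) : bool := ~: C \in op.

Definition cl (A : {set X}) : {set X} :=
  \bigcap_(C | closedb C && (A \subset C)) C.

Definition locally_closed (A : {set X}) : bool := closedb (cl A :\: A).

Definition pt (n : nat) := 'I_n.+1 -> R.

Definition in_simplex (n : nat) (p : pt n) : Prop :=
  (forall i, Rle R0 (p i)) /\ \big[Rplus/R0]_(i < n.+1) p i = R1.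

(* a (candidate) singular n-simplex; only its restriction to Δ^n matters *)
Definition Sim (n : nat) := pt n -> X.

(* continuity of σ : Δ^n -> X (Δ^n with the subspace topology of R^{n+1},
   which is induced by the sup-metric) *)
Definition continuous_on_simplex (n : nat) (s : Sim n) : Prop :=
  forall U, U \in op -> forall p, in_simplex p -> s p \in U ->
    exists2 eps : R, Rlt R0 eps &
      forall q, in_simplex q -> (forall i, Rlt (Rabs (Rminus (q i) (p i))) eps) ->
        s q \in U.

Definition singular_in (A : {set X}) (n : nat) (s : Sim n) : Prop :=
  continuous_on_simplex s /\ forall p, in_simplex p -> s p \in A.

Definition agree (n : nat) (s t : Sim n) : Prop :=
  forall p, in_simplex p -> s p = t p.

Definition chain (n : nat) := seq (Z * Sim n).

Definition coef (n : nat) (c : chain n) (s : Sim n) : Z :=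
  \big[Z.add/0%Z]_(e <- c)
     (if excluded_middle_informative (agree e.2 s) then e.1 else 0%Z).

Definition chain_eq (n : nat) (c d : chain n) : Prop :=
  forall s, coef c s = coef d s.

Definition chain_in (A : {set X}) (n : nat) (c : chain n) : Prop :=
  forall e, List.In e c -> singular_in A e.2.

(* i-th face map Δ^n -> Δ^{n+1} (insert a 0 coordinate at position i) *)
Definition face (n : nat) (i : 'I_n.+2) (p : pt n) : pt n.+1 :=
  fun j => match unlift i j with Some k => p k | None => R0 end.

Definition bd (n : nat) (c : chain n.+1) : chain n :=
  flatten [seq [seq ((if odd i then Z.opp e.1 else e.1),
                     (fun p => e.2 (face i p))) | i : 'I_n.+2 <- enum 'I_n.+2]
          | e <- c].

Definition rel_cycle (A B : {set X}) (n : nat) : chain n -> Prop :=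
  match n return chain n -> Prop with
  | 0 => fun c => chain_in A c
  | m.+1 => fun c => chain_in A c /\
              exists2 e : chain m, chain_in B e & chain_eq (bd c) e
  end.

Definition rel_boundary (A B : {set X}) (n : nat) (c : chain n) : Prop :=
  exists (d : chain n.+1) (e : chain n),
    [/\ chain_in A d, chain_in B e & chain_eq c (bd d ++ e)].

Definition rel_homology_nontrivial (A B : {set X}) : Prop :=
  exists n (c : chain n), rel_cycle A B c /\ ~ rel_boundary A B c.

Variable mv : {set {set X}}.

Definition multivector_field : Prop :=
  partition mv [set: X] /\ forall V, V \in mv -> locally_closed V.

Definition critical (V : {set X}) : Prop :=
  rel_homology_nontrivial (cl V) (cl V :\: V).
Definition regular (V : {set X}) : Prop := ~ critical V.

Definition mvec (x : X) : {set X} := pblock mv x.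

Definition compatible (A : {set X}) : bool :=
  [forall x in A, mvec x \subset A].

Definition lc_hull (A : {set X}) : {set X} :=
  \bigcap_(B | [&& locally_closed B, compatible B & A \subset B]) B.

Definition Pi (x : X) : {set X} := cl [set x] :|: mvec x.
Definition PiS (S : {set X}) : {set X} := \bigcup_(x in S) Pi x.

Definition full_solution (g : Z -> X) : Prop :=
  forall t, g (Z.succ t) \in Pi (g t).

Definition alpha (g : Z -> X) : {set X} :=
  lc_hull [set x | pb (forall t, Z.le t 0 -> exists s, Z.le s t /\ g s = x)].
Definition omega (g : Z -> X) : {set X} :=
  lc_hull [set x | pb (forall t, Z.le 0 t -> exists s, Z.le t s /\ g s = x)].

Definition in_single_regular (A : {set X}) : Prop :=
  exists2 V, V \in mv & regular V /\ A \subset V.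

Definition essential (g : Z -> X) : Prop :=
  full_solution g /\
  ~ (in_single_regular (alpha g) \/ in_single_regular (omega g)).

Definition essential_in (S : {set X}) (g : Z -> X) : Prop :=
  essential g /\ forall t, g t \in S.

Definition Inv (S : {set X}) : {set X} :=
  [set x in S | pb (exists g, essential_in S g /\ g Z0 = x)].

Definition invariant_set (S : {set X}) : Prop := Inv S = S.

Definition sol_path (x0 : X) (s : seq X) : bool :=
  path (fun x y => y \in Pi x) x0 s.

Definition isolated_invariant (S : {set X}) : Prop :=
  invariant_set S /\
  exists N : {set X}, [/\ closedb N, PiS S \subset N &
    forall x0 s, sol_path x0 s -> all (fun y => y \in N) (x0 :: s) ->
      x0 \in S -> last x0 s \in S -> all (fun y => y \in S) (x0 :: s)].

Definition link (S1 S2 : {set X}) (g : Z -> X) : Prop :=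
  full_solution g /\ alpha g :&: S1 != set0 /\ omega g :&: S2 != set0.

Definition morse_predecomposition (P : Type) (M : P -> {set X}) : Prop :=
  [/\ (forall p q, p <> q -> [disjoint M p & M q]),
      (forall p, isolated_invariant (M p)) &
      (forall g, essential_in [set: X] g ->
         exists p q, link (M p) (M q) g)].

End FiniteSpace.

(* Main.v *)
Require Import Defs.
From Stdlib Require Import Reals ZArith ClassicalEpsilon.
From mathcomp Require Import all_boot.

Set Implicit Arguments.
Unset Strict Implicit.
Unset Printing Implicit Defensive.

Lemma pbP (Q : Prop) : pb Q -> Q.
Proof. by rewrite /pb; case: excluded_middle_informative. Qed.

Lemma pbT (Q : Prop) : Q -> pb Q.
Proof. by rewrite /pb; case: excluded_middle_informative. Qed.

Section Aux.
Variable X : finType.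
Variable op : {set {set X}}.
Variable mv : {set {set X}}.
Hypothesis top : is_topology op.
Hypothesis mvf : multivector_field op mv.

Lemma closedT : closedb op [set: X].
Proof. by case: top => h0 hT hU hI; rewrite /closedb setCT. Qed.

Lemma closed0 : closedb op set0.
Proof. by case: top => h0 hT hU hI; rewrite /closedb setC0. Qed.

Lemma closedI (A B : {set X}) : closedb op A -> closedb op B -> closedb op (A :&: B).
Proof. case: top => h0 hT hU hI; rewrite /closedb setCI; exact: hU. Qed.

Lemma closedU (A B : {set X}) : closedb op A -> closedb op B -> closedb op (A :|: B).
Proof. case: top => h0 hT hU hI; rewrite /closedb setCU; exact: hI. Qed.

Lemma cl_closed (A : {set X}) : closedb op (cl op A).
Proof.
rewrite /cl; apply: (big_ind (fun C => closedb op C)).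
- exact: closedT.
- exact: closedI.
- by move=> C /andP[].
Qed.

Lemma sub_cl (A : {set X}) : A \subset cl op A.
Proof. by apply/bigcapsP => C /andP[]. Qed.

Lemma cl_min (A C : {set X}) : closedb op C -> A \subset C -> cl op A \subset C.
Proof. by move=> cC hAC; apply: (@bigcap_inf _ _ C); rewrite cC hAC. Qed.

Lemma cl_mono (A B : {set X}) : A \subset B -> cl op A \subset cl op B.
Proof. move=> AB; apply: cl_min; first exact: cl_closed.
exact: subset_trans AB (sub_cl B). Qed.

Lemma cl_id (C : {set X}) : closedb op C -> cl op C = C.
Proof. move=> cC; apply/eqP; rewrite eqEsubset cl_min //=; exact: sub_cl. Qed.

Lemma cl_pts (A : {set X}) : cl op A \subset \bigcup_(a in A) cl op [set a].
Proof.
apply: cl_min.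
  apply: (big_ind (fun C => closedb op C)); [exact: closed0|exact: closedU|].
  by move=> i _; exact: cl_closed.
apply/subsetP => a aA; apply/bigcupP; exists a => //.
by apply: (subsetP (sub_cl _)); rewrite inE.
Qed.

Lemma cl_pt_trans a b c : a \in cl op [set b] -> b \in cl op [set c] ->
  a \in cl op [set c].
Proof.
move=> ab bc; apply: (subsetP _ _ ab); apply: cl_min; first exact: cl_closed.
by rewrite sub1set.
Qed.

Lemma cl_pt_sub (A : {set X}) (c : X) : c \in A -> cl op [set c] \subset cl op A.
Proof. by move=> cA; apply: cl_mono; rewrite sub1set. Qed.

Lemma in_cl1 x : x \in cl op [set x].
Proof. by apply: (subsetP (sub_cl _)); rewrite inE. Qed.

Lemma in_Pi x : x \in Pi op mv x.
Proof. by rewrite /Pi inE in_cl1. Qed.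

Lemma cl_Pi x y : y \in cl op [set x] -> y \in Pi op mv x.
Proof. by move=> h; rewrite /Pi inE h. Qed.

Lemma mvec_Pi x y : y \in mvec mv x -> y \in Pi op mv x.
Proof. by move=> h; rewrite /Pi inE h orbT. Qed.

Lemma triv : trivIset mv.
Proof. by case: mvf => /and3P[]. Qed.

Lemma cov x : x \in cover mv.
Proof. by case: mvf => /and3P[/eqP -> _ _]. Qed.

Lemma mvec_self x : x \in mvec mv x.
Proof. by rewrite /mvec mem_pblock cov. Qed.

Lemma mvec_same x z : z \in mvec mv x -> mvec mv z = mvec mv x.
Proof. move=> h; exact: same_pblock triv h. Qed.

Lemma mvec_def (V : {set X}) x : V \in mv -> x \in V -> mvec mv x = V.
Proof. move=> h1 h2; exact: def_pblock triv h1 h2. Qed.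

Lemma PiS_sub (S : {set X}) x : x \in S -> Pi op mv x \subset PiS op mv S.
Proof. by move=> xS; apply: (@bigcup_sup _ _ x). Qed.

Lemma iso_compat (S : {set X}) : isolated_invariant op mv S -> compatible mv S.
Proof.
case=> _ [N [_ PN hN]].
apply/forall_inP => x xS; apply/subsetP => z zx.
have zP : z \in Pi op mv x by exact: mvec_Pi.
have xN : x \in N by apply: (subsetP PN); apply: (subsetP (PiS_sub xS)); exact: in_Pi.
have zN : z \in N by apply: (subsetP PN); apply: (subsetP (PiS_sub xS)).
have := hN x [:: z; x]; rewrite /sol_path /= zP.
have xz : x \in Pi op mv z by apply: mvec_Pi; rewrite (mvec_same zx) mvec_self.
rewrite xz xN zN xS => /(_ isT isT isT isT) /and3P[_ -> _] //.
Qed.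

Lemma iso_lc (S : {set X}) : isolated_invariant op mv S -> locally_closed op S.
Proof.
case=> _ [N [_ PN hN]].
rewrite /locally_closed.
set D := cl op S :\: S.
suff: cl op D \subset D.
  move=> h; have -> : D = cl op D.
    by apply/eqP; rewrite eqEsubset h sub_cl.
  exact: cl_closed.
apply/subsetP => b /(subsetP (cl_pts D)) /bigcupP [a aD ba].
move: (aD); rewrite inE => /andP [aS /(subsetP (cl_pts S)) /bigcupP [c cS ac]].
have bc := cl_pt_trans ba ac.
rewrite inE (subsetP (cl_pt_sub cS) _ bc) andbT.
apply/negP => bS.
have inN y : y \in S -> Pi op mv y \subset N.
  by move=> yS; exact: subset_trans (PiS_sub yS) PN.
have aP : a \in Pi op mv c by exact: cl_Pi.
have bP : b \in Pi op mv a by exact: cl_Pi.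
have cN : c \in N by apply: (subsetP (inN _ cS)); exact: in_Pi.
have aN : a \in N by apply: (subsetP (inN _ cS)).
have bN : b \in N by apply: (subsetP (inN _ bS)); exact: in_Pi.
have := hN c [:: a; b]; rewrite /sol_path /= aP bP cN aN bN cS bS.
by move=> /(_ isT isT isT isT) /and3P [_ aS' _]; rewrite aS' in aS.
Qed.

Lemma lc_hull_sub (A B : {set X}) : locally_closed op B -> compatible mv B -> A \subset B ->
  lc_hull op mv A \subset B.
Proof. by move=> h1 h2 h3; apply: (@bigcap_inf _ _ B); rewrite h1 h2 h3. Qed.

Lemma in_lc_hull (A : {set X}) x : x \in A -> x \in lc_hull op mv A.
Proof. by move=> xA; apply/bigcapP => B /and3P [_ _ /subsetP]; apply. Qed.

End Aux.

Theorem proposition4p4 (X : finType) (op : {set {set X}}) (mv : {set {set X}})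
  (P : Type) (M : P -> {set X}) :
  is_topology op -> T0 op ->
  multivector_field op mv ->
  invariant_set op mv [set: X] ->
  morse_predecomposition op mv M ->
  (forall S : {set X}, S != set0 -> isolated_invariant op mv S ->
     exists p, S :&: M p != set0) /\
  (forall V, V \in mv -> critical op V ->
     forall x, x \in V -> exists p, x \in M p).
Proof.
move=> top _ mvf _ [_ Miso Mlink]; split.
  move=> S /set0Pn [x xS] Siso.
  have Sinv := Siso; case: Sinv => Sinv _.
  move: xS; rewrite -{1}Sinv /Inv inE => /andP [_ /pbP [g [[ess gS] _]]].
  have [p [q [_ [hp _]]]] := Mlink g (conj ess (fun t => in_setT (g t))).
  exists p; case/set0Pn: hp => y; rewrite inE => /andP [ya yM].
  apply/set0Pn; exists y; rewrite inE yM andbT.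
  apply: (subsetP _ _ ya); apply: lc_hull_sub.
  - eapply iso_lc; eauto.
  - eapply iso_compat; eauto.
  apply/subsetP => z; rewrite inE => /pbP /(_ 0%Z (Z.le_refl _)) [s [_ <-]].
  exact: gS.
move=> V Vmv Vcrit x xV.
set g := fun _ : Z => x.
have key (A : {set X}) : x \in A -> A \subset V -> ~ in_single_regular op mv (lc_hull op mv A).
  move=> xA AV [W Wmv [Wreg sub]].
  have xW : x \in W by apply: (subsetP sub); exact: in_lc_hull.
  have : V = W by rewrite -(mvec_def mvf Vmv xV) (mvec_def mvf Wmv xW).
  by move=> e; apply: Wreg; rewrite -e.
have Vlc : locally_closed op V by case: mvf => _; apply.
have Vcomp : compatible mv V.
  by apply/forall_inP => y yV; rewrite (mvec_def mvf Vmv yV).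
have Aa : x \in [set z | pb (forall t, Z.le t 0 -> exists s, Z.le s t /\ g s = z)].
  by rewrite inE; apply: pbT => t _; exists t; split; [exact: Z.le_refl|done].
have Ao : x \in [set z | pb (forall t, Z.le 0 t -> exists s, Z.le t s /\ g s = z)].
  by rewrite inE; apply: pbT => t _; exists t; split; [exact: Z.le_refl|done].
have AaV : [set z | pb (forall t, Z.le t 0 -> exists s, Z.le s t /\ g s = z)] \subset V.
  apply/subsetP => z; rewrite inE => /pbP /(_ 0%Z (Z.le_refl _)) [s [_ <-]].
  exact: xV.
have AoV : [set z | pb (forall t, Z.le 0 t -> exists s, Z.le t s /\ g s = z)] \subset V.
  apply/subsetP => z; rewrite inE => /pbP /(_ 0%Z (Z.le_refl _)) [s [_ <-]].
  exact: xV.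
have ess : essential op mv g.
  split; first by move=> t; exact: in_Pi.
  by case; [apply: key Aa AaV | apply: key Ao AoV].
have [p [q [_ [hp _]]]] := Mlink g (conj ess (fun t => in_setT (g t))).
exists p; case/set0Pn: hp => y; rewrite inE => /andP [ya yM].
have yV : y \in V by apply: (subsetP (lc_hull_sub Vlc Vcomp AaV)).
have := iso_compat mvf (Miso p).
move=> /forall_inP /(_ y yM) /subsetP; apply.
by rewrite (mvec_def mvf Vmv yV).
Qed.
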